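(* Let $(M,g)$ be a Riemannian manifold of dimension $n$, with $\mathcal{T}M$, $V$, $G$, $\xi_1,\xi_2$, $\omega^1,\omega^2$, $f$ as in the context (on the open set where $F^2+K^2>0$). Let $V_{\xi_2}=\{X\in V:\ \omega^2(X)=0\}$, $\overline{G}=G|_{V_{\xi_2}}$, $\overline{f}=f|_{V_{\xi_2}}$ (an endomorphism of $V_{\xi_2}$) and $\overline{\eta}=\omega^1|_{V_{\xi_2}}$. Then for all sections $X,Y$ of $V_{\xi_2}$, $$\overline{G}(\overline{f}(X),\overline{f}(Y))=\overline{G}(X,Y)-\overline{\eta}(X)\overline{\eta}(Y).$$
   Context: Let $M$ be an $n$-dimensional smooth manifold with a Riemannian metric $g=(g_{ij})$, with inverse matrix $(g^{ij})$; summation convention is used. The big-tangent manifold $\mathcal{T}M$ is the total space of $TM\oplus T^*M\to M$; over a chart $(U,(x^i))$ it has coordinates $(x^i,y^i,p_i)$, the point being $y^i\frac{\partial}{\partial x^i}|_x+p_i\,dx^i|_x$. The vertical bundle $V\subset T\mathcal{T}M$ is tangent to the fibres of $\mathcal{T}M\to M$, locally spanned by $\{\frac{\partial}{\partial y^i},\frac{\partial}{\partial p_i}\}$. Put $y_i=g_{ij}y^j$, $p^i=g^{ij}p_j$, $F^2=g_{ij}y^iy^j$, $K^2=g^{ij}p_ip_j$; all objects are considered where $F^2+K^2>0$. $G$ is the metric on $V$ with $G(\frac{\partial}{\partial y^i},\frac{\partial}{\partial y^j})=g_{ij}$, $G(\frac{\partial}{\partial p_i},\frac{\partial}{\partial p_j})=g^{ij}$,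 $G(\frac{\partial}{\partial y^i},\frac{\partial}{\partial p_j})=0$. $\phi:V\to V$ is given by $\phi(\frac{\partial}{\partial y^i})=-g_{ij}\frac{\partial}{\partial p_j}$, $\phi(\frac{\partial}{\partial p_i})=g^{ij}\frac{\partial}{\partial y^j}$. $\xi_2=\frac{1}{\sqrt{F^2+K^2}}(y^i\frac{\partial}{\partial y^i}+p_i\frac{\partial}{\partial p_i})$, $\xi_1=\frac{1}{\sqrt{F^2+K^2}}(p^i\frac{\partial}{\partial y^i}-y_i\frac{\partial}{\partial p_i})$. $\omega^1,\omega^2\in\Gamma(V^* )$: $\omega^1(\frac{\partial}{\partial y^i})=\frac{p_i}{\sqrt{F^2+K^2}}$, $\omega^1(\frac{\partial}{\partial p_i})=-\frac{y^i}{\sqrt{F^2+K^2}}$, $\omega^2(\frac{\partial}{\partial y^i})=\frac{y_i}{\sqrt{F^2+K^2}}$, $\omega^2(\frac{\partial}{\partial p_i})=\frac{p^i}{\sqrt{F^2+K^2}}$. $f:V\to V$, $f(X)=\phi(X)-\omega^2(X)\xi_1+\omega^1(X)\xi_2$. *)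

(* Defs.v *)
(* Pointwise (fibrewise) linear-algebra model of the vertical
   bundle V of the big-tangent manifold over a chart. *)
From HB Require Import structures.
From mathcomp Require Import all_boot all_order all_algebra.
Set Implicit Arguments. Unset Strict Implicit. Unset Printing Implicit Defensive.
Import Order.TTheory GRing.Theory Num.Theory.
Local Open Scope ring_scope.

Definition sc (R : rcfType) (n : nat) (u v : 'rV[R]_n) (A : 'M[R]_n) : R :=
  (u *m A *m v^T) 0 0.

(* A vertical vector X = a^i d/dy^i + b_i d/dp_i is the pair (a, b). *)
Definition Vvec (R : rcfType) (n : nat) := ('rV[R]_n * 'rV[R]_n)%type.

Definition vadd (R : rcfType) (n : nat) (X Y : Vvec R n) : Vvec R n :=
  (X.1 + Y.1, X.2 + Y.2).
Definition vscale (R : rcfType) (n : nat) (c : R) (X : Vvec R n) : Vvec R n :=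
  (c *: X.1, c *: X.2).

Definition Gm (R : rcfType) (n : nat) (g : 'M[R]_n) (X Y : Vvec R n) : R :=
  sc X.1 Y.1 g + sc X.2 Y.2 (invmx g).

Definition F2 (R : rcfType) (n : nat) (g : 'M[R]_n) (y : 'rV[R]_n) : R := sc y y g.
Definition K2 (R : rcfType) (n : nat) (g : 'M[R]_n) (p : 'rV[R]_n) : R :=
  sc p p (invmx g).
Definition nrm (R : rcfType) (n : nat) (g : 'M[R]_n) (y p : 'rV[R]_n) : R :=
  Num.sqrt (F2 g y + K2 g p).

(* phi(d/dy^i) = - g_ij d/dp_j,  phi(d/dp_i) = g^ij d/dy^j *)
Definition phi (R : rcfType) (n : nat) (g : 'M[R]_n) (X : Vvec R n) : Vvec R n :=
  (X.2 *m invmx g, - (X.1 *m g)).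

(* xi_2 = (y^i d/dy^i + p_i d/dp_i)/S,  xi_1 = (p^i d/dy^i - y_i d/dp_i)/S *)
Definition xi2 (R : rcfType) (n : nat) (g : 'M[R]_n) (y p : 'rV[R]_n) : Vvec R n :=
  ((nrm g y p)^-1 *: y, (nrm g y p)^-1 *: p).
Definition xi1 (R : rcfType) (n : nat) (g : 'M[R]_n) (y p : 'rV[R]_n) : Vvec R n :=
  ((nrm g y p)^-1 *: (p *m invmx g), (nrm g y p)^-1 *: - (y *m g)).

(* omega^1(X) = (a^i p_i - b_i y^i)/S,  omega^2(X) = (a^i y_i + b_i p^i)/S *)
Definition omega1 (R : rcfType) (n : nat) (g : 'M[R]_n) (y p : 'rV[R]_n)
  (X : Vvec R n) : R :=
  (nrm g y p)^-1 * ((X.1 *m p^T) 0 0 - (X.2 *m y^T) 0 0).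
Definition omega2 (R : rcfType) (n : nat) (g : 'M[R]_n) (y p : 'rV[R]_n)
  (X : Vvec R n) : R :=
  (nrm g y p)^-1 * ((X.1 *m (y *m g)^T) 0 0 + (X.2 *m (p *m invmx g)^T) 0 0).

Definition fV (R : rcfType) (n : nat) (g : 'M[R]_n) (y p : 'rV[R]_n)
  (X : Vvec R n) : Vvec R n :=
  vadd (vadd (phi g X) (vscale (- omega2 g y p X) (xi1 g y p)))
       (vscale (omega1 g y p X) (xi2 g y p)).

(* Main.v *)
Require Import Defs.
From HB Require Import structures.
From mathcomp Require Import all_boot all_order all_algebra.
From mathcomp Require Import ring.
Import Order.TTheory GRing.Theory Num.Theory.
Local Open Scope ring_scope.

Section S.
Variables (R : rcfType) (n : nat).
Implicit Types (u v w : 'rV[R]_n) (M A : 'M[R]_n).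

Lemma scDl u1 u2 v M : sc (u1 + u2) v M = sc u1 v M + sc u2 v M.
Proof. by rewrite /sc !mulmxDl [LHS]mxE. Qed.
Lemma scDr u v1 v2 M : sc u (v1 + v2) M = sc u v1 M + sc u v2 M.
Proof. by rewrite /sc linearD /= mulmxDr [LHS]mxE. Qed.
Lemma scZl c u v M : sc (c *: u) v M = c * sc u v M.
Proof. by rewrite /sc -!scalemxAl [LHS]mxE. Qed.
Lemma scZr c u v M : sc u (c *: v) M = c * sc u v M.
Proof. by rewrite /sc linearZ /= -scalemxAr [LHS]mxE. Qed.
Lemma scNl u v M : sc (- u) v M = - sc u v M.
Proof. by rewrite /sc !mulNmx [LHS]mxE. Qed.
Lemma scNr u v M : sc u (- v) M = - sc u v M.
Proof. by rewrite /sc linearN /= mulmxN [LHS]mxE. Qed.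
Lemma scMl u v A M : sc (u *m A) v M = sc u v (A *m M).
Proof. by rewrite /sc !mulmxA. Qed.
Lemma scMr u v A M : sc u (v *m A) M = sc u v (M *m A^T).
Proof. by rewrite /sc trmx_mul !mulmxA. Qed.
Lemma scT u v M : sc u v M = sc v u M^T.
Proof.
have E (B : 'M[R]_1) : B 0 0 = B^T 0 0 by rewrite mxE.
by rewrite /sc E !trmx_mul trmxK mulmxA.
Qed.
Lemma sc1 u v : (u *m v^T) 0 0 = sc u v 1%:M.
Proof. by rewrite /sc mulmx1. Qed.
End S.

Theorem theorem5p5 (R : rcfType) (n : nat) (g : 'M[R]_n) (y p : 'rV[R]_n) :
  g^T = g ->
  (forall v : 'rV[R]_n, v != 0 -> 0 < sc v v g) ->
  0 < F2 g y + K2 g p ->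
  forall X Y : Vvec R n,
    omega2 g y p X = 0 -> omega2 g y p Y = 0 ->
    Gm g (fV g y p X) (fV g y p Y) = Gm g X Y - omega1 g y p X * omega1 g y p Y.
Proof.
move=> gs gpos Spos [aX bX] [aY bY] hX hY.
have gU : g \in unitmx.
  rewrite unitmxE unitfE; apply/negP => /det0P [v v0 vg].
  have := gpos v v0; rewrite /sc vg mul0mx mxE ltxx //.
set h := invmx g.
have hg : h *m g = 1%:M by exact: mulVmx.
have gh : g *m h = 1%:M by exact: mulmxV.
have hs : h^T = h by rewrite /h trmx_inv gs.
have key : (nrm g y p)^-1 * (nrm g y p)^-1 * (sc y y g + sc p p h) = 1.
  have nz : nrm g y p != 0 by rewrite /nrm sqrtr_eq0 -ltNge Spos.
  have : nrm g y p ^+ 2 = sc y y g + sc p p h.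
    by rewrite /nrm sqr_sqrtr // ltW.
  move=> <-; by field.
rewrite /fV hX hY /Gm /= /omega1 /=.
rewrite !(scDl, scDr, scZl, scZr, scNl, scNr, scMl, scMr, sc1).
rewrite -/h !(hs, gs) !mulmxA !(hg, gh) !(mul1mx, mulmx1).
rewrite (@scT _ _ y bY) (@scT _ _ p aY) trmx1.
set s := (nrm g y p)^-1 in key *.
set F := sc y y g in key *; set K := sc p p h in key *.
have s0 : s != 0 by apply/eqP => s0; move: key; rewrite s0 !mul0r => /eqP; rewrite eq_sym oner_eq0.
have eF : F = s^-1 * s^-1 - K.
  apply/eqP; rewrite -subr_eq0; apply/eqP.
  have -> : F - (s^-1 * s^-1 - K) = s^-1 * s^-1 * (s * s * (F + K) - 1) by field.
  by rewrite key subrr mulr0.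
rewrite eF; field; exact s0.
Qed.
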